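(* Let $E$ be a metrizable locally solid vector lattice which is an ideal in its topological completion $\widehat E$. Then $E$ has the countable sup property if and only if $\widehat E$ has the countable sup property.
   Context: A locally solid vector lattice is an (Archimedean) vector lattice with a linear topology having a base of zero neighborhoods consisting of solid sets; its topological completion $\widehat E$ is the completion of the topological vector space $E$, which is again a locally solid vector lattice containing $E$ as a dense vector sublattice. A vector lattice has the countable sup property if every nonempty subset possessing a supremum contains a countable subset with the same supremum. *)

(* Defs.v *)
From HB Require Import structures.
From mathcomp Require Import all_boot all_order all_algebra.
From mathcomp Require Import all_classical all_reals all_analysis.
Set Implicit Arguments. Unset Strict Implicit. Unset Printing Implicit Defensive.
Import Order.TTheory GRing.Theory Num.Theory.
Local Open Scope classical_set_scope.
Local Open Scope ring_scope.

Section VectorLattices.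
Variables (R : realType) (E : topologicalLmodType R) (le : E -> E -> Prop).

Definition is_sup (A : set E) (s : E) : Prop :=
  (forall x, A x -> le x s) /\ (forall u, (forall x, A x -> le x u) -> le s u).

Definition archimedean_vector_lattice : Prop :=
  (forall x, le x x) /\
  (forall x y, le x y -> le y x -> x = y) /\
  (forall x y z, le x y -> le y z -> le x z) /\
  (forall x y z, le x y -> le (x + z) (y + z)) /\
  (forall (a : R) x y, 0 <= a -> le x y -> le (a *: x) (a *: y)) /\
  (forall x y, exists s, is_sup [set x; y] s) /\
  (forall x y, (forall n : nat, le 0 (x *+ n) /\ le (x *+ n) y) -> x = 0).

Definition is_abs (x a : E) : Prop := is_sup [set x; - x] a.

Definition solid (A : set E) : Prop :=
  forall x y a b, A x -> is_abs x a -> is_abs y b -> le b a -> A y.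

Definition locally_solid : Prop :=
  forall U : set E, nbhs (0 : E) U ->
    exists V : set E, [/\ nbhs (0 : E) V, solid V & V `<=` U].

Definition locally_solid_vector_lattice : Prop :=
  archimedean_vector_lattice /\ locally_solid.

Definition countable_sup_property : Prop :=
  forall (A : set E) (s : E), A !=set0 -> is_sup A s ->
    exists B : set E, [/\ B `<=` A, countable B & is_sup B s].

Definition metrizable : Prop :=
  exists d : E -> E -> R,
    [/\ (forall x y, 0 <= d x y),
        (forall x y, d x y = 0 <-> x = y),
        (forall x y, d x y = d y x),
        (forall x y z, d x z <= d x y + d y z) &
        (forall (x : E) (A : set E),
            nbhs x A <-> exists2 e : R, 0 < e & [set y | d x y < e] `<=` A)].

(** Cauchy filters and completeness for the (translation invariant)
    uniformity of a topological vector space *)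
Definition tvs_cauchy (G : set_system E) : Prop :=
  forall U : set E, nbhs (0 : E) U ->
    exists2 A : set E, G A & (forall x y, A x -> A y -> U (x - y)).

Definition tvs_complete : Prop :=
  forall G : set_system E, ProperFilter G -> tvs_cauchy G -> exists l : E, G --> l.

End VectorLattices.

Section Completion.
Variables (R : realType) (E F : topologicalLmodType R)
  (leE : E -> E -> Prop) (leF : F -> F -> Prop) (j : E -> F).

(** (F, leF, j) is a topological completion of the locally solid vector
    lattice (E, leE): F is a complete Hausdorff locally solid vector lattice
    and j is an injective linear lattice homomorphism which is a topological
    embedding with dense range (so E is identified with a dense vector
    sublattice of F). *)
Definition is_lsvl_completion : Prop :=
  locally_solid_vector_lattice leF /\
  hausdorff_space F /\
  tvs_complete F /\
  (forall (a : R) x y, j (a *: x + y) = a *: j x + j y) /\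
  injective j /\
  (forall x y s, is_sup leE [set x; y] s -> is_sup leF [set j x; j y] (j s)) /\
  continuous j /\
  (forall U : set E, nbhs (0 : E) U ->
      exists2 V : set F, nbhs (0 : F) V & (forall x, V (j x) -> U x)) /\
  closure (range j) = setT.

(** the image of E is an ideal (solid linear subspace) of F *)
Definition ideal_in : Prop := solid leF (range j).

End Completion.

(* Main.v *)
Require Import Defs.
From HB Require Import structures.
From mathcomp Require Import all_boot all_order all_algebra.
From mathcomp Require Import all_classical all_reals all_analysis.
Set Implicit Arguments. Unset Strict Implicit. Unset Printing Implicit Defensive.
Import Order.TTheory GRing.Theory Num.Theory.
Local Open Scope classical_set_scope.
Local Open Scope ring_scope.


Section Lat.
Variables (R : realType) (V : topologicalLmodType R) (le : V -> V -> Prop).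
Hypothesis HV : archimedean_vector_lattice le.

Lemma leR x : le x x. Proof. by case: HV. Qed.
Lemma leA x y : le x y -> le y x -> x = y. Proof. by case: HV => _ [h _]; apply: h. Qed.
Lemma leT x y z : le x y -> le y z -> le x z. Proof. by case: HV => _ [_ [h _]]; apply: h. Qed.
Lemma leD x y z : le x y -> le (x + z) (y + z). Proof. by case: HV => _ [_ [_ [h _]]]; apply: h. Qed.
Lemma leZ (a : R) x y : 0 <= a -> le x y -> le (a *: x) (a *: y).
Proof. by case: HV => _ [_ [_ [_ [h _]]]]; apply: h. Qed.
Lemma sup2 x y : exists s, is_sup le [set x; y] s.
Proof. by case: HV => _ [_ [_ [_ [_ [h _]]]]]; apply: h. Qed.

Lemma le_eq x y x' y' : x = x' -> y = y' -> le x y -> le x' y'.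
Proof. by move=> -> ->. Qed.

Lemma leDl x y z : le x y -> le (z + x) (z + y).
Proof. by move=> h; rewrite ![z + _]addrC; apply: leD. Qed.

Lemma le_add2 a b c d : le a b -> le c d -> le (a + c) (b + d).
Proof. by move=> h1 h2; apply: leT (leD c h1) (leDl b h2). Qed.

Lemma le_opp x y : le x y -> le (- y) (- x).
Proof.
move=> h; have := leD (- x - y) h.
by apply: le_eq; [rewrite addrA subrr add0r | rewrite addrCA subrr addr0].
Qed.

Lemma le_subl x y z : le (x - y) z -> le (x - z) y.
Proof.
move=> h; have := leD (y - z) h.
by apply: le_eq; [rewrite addrA subrK | rewrite addrC subrK].
Qed.

Lemma le_sub0 x y : le x y -> le 0 (y - x).
Proof. by move=> h; have := leD (- x) h; apply: le_eq; rewrite ?subrr. Qed.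

Lemma le_0sub x y : le 0 (y - x) -> le x y.
Proof. by move=> h; have := leD x h; apply: le_eq; rewrite ?add0r ?subrK. Qed.

Lemma le_subr x y z : le x (y - z) -> le (x + z) y.
Proof. by move=> h; have := leD z h; apply: le_eq; rewrite ?subrK. Qed.

Lemma le_addr x y z : le (x + z) y -> le x (y - z).
Proof. by move=> h; have := leD (- z) h; apply: le_eq; rewrite ?addrK. Qed.

Lemma sup_uniq A s s' : is_sup le A s -> is_sup le A s' -> s = s'.
Proof. by move=> [h1 h2] [h3 h4]; apply: leA; [apply: h2|apply: h4]. Qed.

Definition jn x y : V := xget 0 [set s | is_sup le [set x; y] s].

Lemma jn_sup x y : is_sup le [set x; y] (jn x y).
Proof. exact: (xgetPex 0 (sup2 x y)). Qed.

Lemma jn_l x y : le x (jn x y).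
Proof. by case: (jn_sup x y) => h _; apply: h; left. Qed.
Lemma jn_r x y : le y (jn x y).
Proof. by case: (jn_sup x y) => h _; apply: h; right. Qed.
Lemma jn_lub x y u : le x u -> le y u -> le (jn x y) u.
Proof. by case: (jn_sup x y) => _ h hx hy; apply: h => z [->|->]. Qed.

Lemma jnC x y : jn x y = jn y x.
Proof. by apply: leA; apply: jn_lub; (apply: jn_l || apply: jn_r). Qed.

Lemma jnD x y z : jn (x + z) (y + z) = jn x y + z.
Proof.
apply: leA.
  by apply: jn_lub; apply: leD; (apply: jn_l || apply: jn_r).
apply: le_subr; apply: jn_lub; apply: le_addr; (apply: jn_l || apply: jn_r).
Qed.

Definition mt x y := - jn (- x) (- y).

Lemma mt_l x y : le (mt x y) x.
Proof. by rewrite -[x in le _ x]opprK; apply: le_opp; apply: jn_l. Qed.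
Lemma mt_r x y : le (mt x y) y.
Proof. by rewrite -[y in le _ y]opprK; apply: le_opp; apply: jn_r. Qed.
Lemma mt_glb x y u : le u x -> le u y -> le u (mt x y).
Proof.
move=> hx hy; rewrite -[u]opprK; apply: le_opp; apply: jn_lub; exact: le_opp.
Qed.

Lemma mtE x y : mt x y = x + y - jn x y.
Proof.
have := jnD (- x) (- y) (x + y).
have -> : - x + (x + y) = y by rewrite addrA addNr add0r.
have -> : - y + (x + y) = x by rewrite addrCA addNr addr0.
move=> h; have -> : mt x y = - (jn y x - (x + y)) by rewrite h addrK.
by rewrite opprB jnC.
Qed.

Definition ab x := jn x (- x).

Lemma ab_ge x : le x (ab x). Proof. exact: jn_l. Qed.
Lemma ab_geN x : le (- x) (ab x). Proof. exact: jn_r. Qed.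
Lemma ab_is x : is_abs le x (ab x). Proof. exact: jn_sup. Qed.

Lemma ab_ge0 x : le 0 (ab x).
Proof.
have h := le_add2 (ab_ge x) (ab_geN x); rewrite subrr in h.
have h2 : (0 : R) <= 2^-1 by rewrite invr_ge0 ler0n.
have := @leZ (2^-1 : R) _ _ h2 h.
rewrite scaler0; apply: le_eq => //.
by rewrite -mulr2n -(scaler_nat 2 (ab x)) scalerA mulVf ?pnatr_eq0 // scale1r.
Qed.

Lemma abs_pos x : le 0 x -> is_abs le x x.
Proof.
move=> h; split; last by move=> u; apply; left.
move=> z [->|->]; first exact: leR.
apply: (@leT _ 0 _ _ h); rewrite -oppr0; exact: le_opp.
Qed.

Lemma le_sup2 x y : le x y -> is_sup le [set x; y] y.
Proof.
move=> h; split; last by move=> u; apply; right.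
by move=> z [->|->] //; apply: leR.
Qed.

Lemma sup2_le x y : is_sup le [set x; y] y -> le x y.
Proof. by case=> h _; apply: h; left. Qed.

Lemma distr1 a f s v : le a s -> le (mt a f) v -> le a (v + jn s f - f).
Proof.
move=> has hv.
have e : a = mt a f + jn a f - f by rewrite mtE subrK addrK.
rewrite e; apply: leD; apply: le_add2 => //.
apply: jn_lub; last exact: jn_r.
exact: leT has (jn_l _ _).
Qed.

Lemma distr2 s f v : le s (v + jn s f - f) -> le (mt s f) v.
Proof.
move=> /le_subr h; rewrite mtE.
by have := leD (- jn s f) h; apply: le_eq; rewrite ?addrK.
Qed.

Lemma pp_ge0 x : le 0 (jn x 0). Proof. exact: jn_r. Qed.

End Lat.
Lemma nbhs_add0 (M : topologicalZmodType) (W : set M) : nbhs 0 W ->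
  exists2 W1 : set M, nbhs 0 W1 & forall a b, W1 a -> W1 b -> W (a + b).
Proof.
move=> hW; have := @add_continuous M (0, 0) W; rewrite /= addr0 => /(_ hW).
case=> [[A B]] /= [hA hB] hAB; exists (A `&` B); first exact: filterI.
by move=> a b [ha _] [_ hb]; exact: (hAB (a, b)).
Qed.

Lemma nbhs_sub0 (M : topologicalZmodType) (W : set M) : nbhs 0 W ->
  exists2 W1 : set M, nbhs 0 W1 & forall a b, W1 a -> W1 b -> W (a - b).
Proof.
move=> hW; have := @sub_continuous M (0, 0) W; rewrite /= subr0 => /(_ hW).
case=> [[A B]] /= [hA hB] hAB; exists (A `&` B); first exact: filterI.
by move=> a b [ha _] [_ hb]; exact: (hAB (a, b)).
Qed.

Lemma nbhs_transl (M : topologicalZmodType) (N : set M) (p : M) : nbhs 0 N ->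
  nbhs p [set z | N (p - z)].
Proof.
move=> hN.
have hc : (fun z : M => p - z) @ p --> p - p.
  apply: (@continuous_comp _ _ _ (fun z => (p, z)) (fun x : M * M => x.1 - x.2)).
    by apply: cvg_pair => /=; [exact: cvg_cst|exact: cvg_id].
  exact: sub_continuous.
rewrite subrr in hc; exact: hc.
Qed.

Lemma choiceE X Y (P : X -> Y -> Prop) :
  (forall x, exists y, P x y) -> exists f : X -> Y, forall x, P x (f x).
Proof. by move=> /choice [f hf]; exists f. Qed.
Section Transfer.
Variables (R : realType) (E F : topologicalLmodType R)
  (leE : E -> E -> Prop) (leF : F -> F -> Prop) (j : E -> F).
Hypotheses (HE : archimedean_vector_lattice leE)
  (HF : archimedean_vector_lattice leF)
  (jlin : forall (a : R) x y, j (a *: x + y) = a *: j x + j y)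
  (jinj : injective j)
  (jsup : forall x y s, is_sup leE [set x; y] s -> is_sup leF [set j x; j y] (j s))
  (HI : ideal_in leF j).

Lemma jD x y : j (x + y) = j x + j y.
Proof. by have := jlin 1 x y; rewrite !scale1r. Qed.
Lemma j0 : j 0 = 0.
Proof. by apply/(addrI (j 0)); rewrite addr0 -jD addr0. Qed.
Lemma jN x : j (- x) = - j x.
Proof. by have := jlin (-1) x 0; rewrite !addr0 j0 addr0 !scaleN1r. Qed.
Lemma jB x y : j (x - y) = j x - j y.
Proof. by rewrite jD jN. Qed.

Lemma j_mono x y : leE x y -> leF (j x) (j y).
Proof. by move=> h; apply: sup2_le; apply: jsup; apply: le_sup2 HE _ _ h. Qed.

Lemma j_refl x y : leF (j x) (j y) -> leE x y.
Proof.
move=> h; have [s hs] := sup2 HE x y.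
have e : j s = j y by apply: (sup_uniq HF (jsup hs)); apply: le_sup2.
by move: hs; rewrite (jinj e) => /sup2_le.
Qed.

Lemma ideal_pos c e : leF 0 c -> leF c (ab leF (j e)) -> range j c.
Proof.
move=> h0 h1; apply: (HI (x := j e) (a := ab leF (j e)) (b := c)).
- by exists e.
- exact: ab_is.
- exact: abs_pos.
- exact: h1.
Qed.

Lemma sup_transfer (B : set E) t b0 u : is_sup leE B t -> leE b0 t ->
  leF (j b0) u -> (forall b, B b -> leF (j b) u) -> leF (j t) u.
Proof.
move=> [Bub Blub] hb0t hb0u hB.
set m := mt leF (j t) u.
have hm0 : leF (j b0) m := mt_glb HF (j_mono hb0t) hb0u.
have c0 : leF 0 (j t - m) := le_sub0 HF (mt_l HF _ _).
have c1 : leF (j t - m) (ab leF (j (t - b0))).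
  apply: (leT HF (y := j (t - b0))); last exact: ab_ge.
  rewrite jB; apply: leDl => //.
  exact: le_opp.
have [z _ hz] := ideal_pos c0 c1.
have hmz : m = j (t - z) by rewrite jB hz opprB addrC subrK.
have : leE t (t - z).
  apply: Blub => b hb; apply: j_refl; rewrite -hmz.
  rewrite /m; apply: (mt_glb HF); last exact: hB.
  by apply: j_mono; apply: Bub.
by move=> /j_mono; rewrite -hmz => h; apply: (leT HF h); rewrite /m; exact: mt_r.
Qed.

End Transfer.

Lemma approx (R : realType) (E F : topologicalLmodType R) (j : E -> F) (p : F) :
  metrizable E ->
  (forall (a : R) x y, j (a *: x + y) = a *: j x + j y) ->
  continuous j ->
  (forall U : set E, nbhs (0 : E) U ->
      exists2 V : set F, nbhs (0 : F) V & (forall x, V (j x) -> U x)) ->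
  closure (range j) = setT ->
  exists e : nat -> E, forall W, nbhs (0 : F) W -> exists n, W (p - j (e n)).
Proof.
move=> [d [d0 dE dC dT dN]] jlin jcont emb Hcl.
have jD x y : j (x + y) = j x + j y by have := jlin 1 x y; rewrite !scale1r.
have j0 : j 0 = 0 by apply/(addrI (j 0)); rewrite addr0 -jD addr0.
have jB x y : j (x - y) = j x - j y.
  by have := jlin (-1) y x; rewrite !scaleN1r addrC => ->; rewrite addrC.
have dens (N : set F) q : nbhs 0 N -> exists x, N (q - j x).
  move=> hN; have hq : closure (range j) q by rewrite Hcl.
  have [y [[x _ <-] hy]] := hq _ (nbhs_transl q hN).
  by exists x.
pose U := fun n : nat => [set y : E | d 0 y < n.+1%:R^-1].
have hU n : nbhs (0 : E) (U n).
  by apply/dN; exists n.+1%:R^-1 => //; rewrite invr_gt0 ltr0Sn.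
have hV n : exists V : set F, nbhs (0 : F) V /\ forall x, V (j x) -> U n x.
  by have [V h1 h2] := emb _ (hU n); exists V.
have [Vf hVf] := choiceE hV.
have hV' n : exists V : set F, nbhs (0 : F) V /\ forall a b, V a -> V b -> Vf n (a - b).
  by have [V h1 h2] := nbhs_sub0 (hVf n).1; exists V.
have [V'f hV'f] := choiceE hV'.
have he0 n : exists x, V'f n (p - j x) by apply: dens; exact: (hV'f n).1.
have [e he] := choiceE he0.
exists e => W hW.
have [W1 hW1 hW1W] := nbhs_add0 hW.
have hjW1 : nbhs (0 : E) (j @^-1` W1).
  have hW2 : nbhs (j 0) W1 by rewrite j0.
  exact: (jcont 0 W1 hW2).
have [eps heps hball] := (dN 0 _).1 hjW1.
have [n hn] := ltr_add_invr heps; rewrite add0r in hn.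
have [x [hx1 hx2]] := dens _ p (filterI (hV'f n).1 hW1).
have h1 := (hV'f n).2 _ _ (he n) hx1.
have e1 : p - j (e n) - (p - j x) = j (x - e n).
  by rewrite jB opprB addrC addrA subrK.
rewrite e1 in h1.
have h2 := (hVf n).2 _ h1.
have h3 : W1 (j (x - e n)) by apply: hball; exact: lt_trans h2 hn.
have := hW1W _ _ h3 hx2.
by rewrite jB addrC addrA subrK => h; exists n.
Qed.

Unset Implicit Arguments.

Theorem theorem5p9 (R : realType) (E F : topologicalLmodType R)
  (leE : E -> E -> Prop) (leF : F -> F -> Prop) (j : E -> F) :
  locally_solid_vector_lattice leE ->
  metrizable E ->
  is_lsvl_completion leE leF j ->
  ideal_in leF j ->
  (countable_sup_property leE <-> countable_sup_property leF).
Proof.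
move=> [HE _] metr [[HF HFs] [Hhaus [_ [jlin [jinj [jsup [jcont [jemb Hcl]]]]]]]] HI.
have jm := j_mono HE jsup.
have jr := j_refl HE HF jinj jsup.
have ip := ideal_pos HF HI.
have st := sup_transfer HE HF jlin jinj jsup HI.
split.
- move=> cspE A s [a0 Aa0] [Aub Alub].
  pose s' := s - a0.
  have [e he] := approx s' metr jlin jcont jemb Hcl.
  pose f := fun n => mt leF (ab leF (j (e n))) s'.
  have s'0 : leF 0 s' := le_sub0 HF (Aub _ Aa0).
  pose c := fun a n => mt leF (jn leF a a0 - a0) (f n).
  have f_le n : leF (f n) (ab leF (j (e n))) by apply: mt_l.
  have f_s n : leF (f n) s' by apply: mt_r.
  have f0 n : leF 0 (f n) by apply: (mt_glb HF) => //; exact: ab_ge0.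
  have c0 a n : leF 0 (c a n).
    by apply: (mt_glb HF) => //; apply: (le_sub0 HF); exact: jn_r.
  have cf a n : leF (c a n) (f n) by apply: mt_r.
  have crange a n : range j (c a n) by apply: ip (c0 a n) (leT HF (cf a n) (f_le n)).
  have ht0 n : exists t, j t = f n.
    by have [x _ hx] := ip _ _ (f0 n) (f_le n); exists x.
  have [t ht] := choiceE ht0.
  pose C := fun n => [set x : E | exists2 a, A a & j x = c a n].
  have cle a n u : leF a u -> leF a0 u -> leF (c a n) (u - a0).
    move=> hau ha0u; apply: (leT HF (mt_l HF _ _)); apply: (leD HF).
    exact: jn_lub.
  have Csup n : is_sup leE (C n) (t n).
    split.
      by move=> x [a ha hx]; apply: jr; rewrite hx ht; exact: cf.
    move=> u hu; apply: jr; rewrite ht.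
    have key a : A a -> leF (c a n) (j u).
      move=> ha; have [x _ hx] := crange a n; rewrite -hx; apply: jm; apply: hu.
      by exists a.
    have fs : f n = mt leF s' (f n).
      by apply: (leA HF); [apply: (mt_glb HF) => //; exact: leR | exact: mt_r].
    rewrite fs; apply: (distr2 HF).
    set K := j u + jn leF s' (f n) - f n.
    have hs : leF s (K + a0).
      apply: Alub => a ha.
      have has : leF (jn leF a a0 - a0) s'.
        by apply: (leD HF); apply: (jn_lub HF); apply: Aub.
      have := leD HF a0 (distr1 HF has (key a ha)); rewrite subrK => h.
      exact: (leT HF (jn_l HF _ _) h).
    by have := leD HF (- a0) hs; rewrite addrK.
  have hx0 n : exists x0, j x0 = c a0 n.
    by have [x _ hx] := crange a0 n; exists x.
  have hB0 n : exists B : set E, [/\ B `<=` C n, countable B & is_sup leE B (t n)].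
    apply: cspE; last exact: Csup.
    by have [x hx] := hx0 n; exists x; exists a0.
  have [Bf hBf] := choiceE hB0.
  have hg0 n x : exists a, C n x -> A a /\ j x = c a n.
    case: (pselect (C n x)) => [[a ha hx]|nC]; first by exists a.
    by exists a0.
  have [g hg] := choiceE (fun n => choiceE (hg0 n)).
  pose G := fun n => if n is k.+1 then g k @` Bf k else [set a0].
  pose B := \bigcup_(n in [set: nat]) G n.
  have BA : B `<=` A.
    move=> y [[|k] _ /=]; first by move=> ->.
    move=> [x hx <-]; have [h1 _ _] := hBf k.
    by have [] := hg k x (h1 _ hx).
  exists B; split => //.
    apply: bigcup_countable => // -[|k] _ /=; first exact: countable1.
    have [_ h2 _] := hBf k.
    exact: sub_countable (card_image_le _ _) h2.
  split; first by move=> y /BA; exact: Aub.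
  move=> u hu.
  have a0u : leF a0 u by apply: hu; exists 0%N.
  pose u' := u - a0.
  have fu n : leF (f n) u'.
    have [x0 hx0n] := hx0 n.
    have [h1 h2 h3] := hBf n.
    rewrite -ht; apply: (st (Bf n) _ x0) => //.
    - by apply: (Csup n).1; exists a0.
    - by rewrite hx0n; apply: cle => //.
    - move=> b hb; have [ga hga] := hg n b (h1 _ hb).
      rewrite hga; apply: cle => //; apply: hu; exists n.+1 => //=.
      by exists b.
  pose w := jn leF (s' - u') 0.
  have wW W : nbhs (0 : F) W -> W w.
    move=> hW; have [W0 [hW0 sW0 W0W]] := HFs W hW.
    have [n hn] := he W0 hW0; apply: W0W.
    pose y := j (e n); pose K := ab leF (s' - y).
    apply: (sW0 _ _ _ _ hn (ab_is HF _) (abs_pos HF (jn_r HF _ _))).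
    rewrite /w; apply: (jn_lub HF); last exact: ab_ge0.
    apply: (leT HF (y := s' - f n)); first by apply: (leDl HF); exact: (le_opp HF (fu n)).
    apply: (le_subl HF); rewrite /f; apply: (mt_glb HF).
      apply: (leT HF (y := y)); last exact: ab_ge.
      by apply: (le_subl HF); exact: ab_ge.
    have := leDl HF s' (le_opp HF (ab_ge0 HF (s' - y))).
    by rewrite oppr0 addr0.
  have w0 : w = 0.
    apply/esym/Hhaus => A' B' hA hB; exists w; split; first exact: wW.
    exact: nbhs_singleton.
  have h1 : leF (s' - u') 0 by rewrite -w0; exact: jn_l.
  have := leD HF u' h1; rewrite subrK add0r => h2.
  by have := leD HF a0 h2; rewrite !subrK.
- move=> cspF A t [a1 Aa1] [Aub Alub].
  have jsupA : is_sup leF (j @` A) (j t).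
    split; first by move=> _ [a ha <-]; apply: jm; exact: Aub.
    move=> u hu; apply: (st A _ a1) => //.
    - exact: Aub.
    - by apply: hu; exists a1.
    - by move=> b hb; apply: hu; exists b.
  have [B' [B'sub B'c B'sup]] := cspF _ _ (ex_intro _ (j a1) (ex_intro2 _ _ a1 Aa1 erefl)) jsupA.
  exists (A `&` j @^-1` B'); split.
  - by move=> x [].
  - have /countable_injP[fc hfc] := B'c; apply/countable_injP; exists (fc \o j).
    move=> x y /set_mem [_ hx] /set_mem [_ hy] /= hxy; apply: jinj.
    by apply: hfc => //; apply: mem_set.
  - split; first by move=> x [hx _]; exact: Aub.
    move=> u hu; apply: jr; apply: B'sup.2 => y hy.
    have [x hx ex] := B'sub y hy; subst y.
    by apply: jm; apply: hu; split.
Qed.
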